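(* Let $\Phi$ be an automorphism of $\Theta^0(\mathcal V)$ satisfying both of the following: (1) $\Phi(A)=A$ for every object $A$; (2) $s_A(x)=x$ for every object $A$ and every $x\in X_A$. Let $\omega$ be a basic operation symbol of arity $k\ge1$. Let $A$ be an object with basis $X_A=\{x_1,\dots,x_n\}$, where $n\ge k$. Put $\tilde w=s_A(\omega_A(x_1,\dots,x_k))\in A$. For each object $B$ and $b_1,\dots,b_k\in B$, define $$\tilde\omega_B(b_1,\dots,b_k)=\nu(\tilde w),$$ where $\nu:A\to B$ is the homomorphism with $\nu(x_i)=b_i$ for $i\le k$ and $\nu(x_i)=b_k$ for $k<i\le n$. Thus $\tilde\omega_B$ is the term (polynomial) operation on $B$ given by the term $\tilde w$. Then for every object $B$ and all $b_1,\dots,b_k\in B$, $$s_B(\omega_B(b_1,\dots,b_k))=\tilde\omega_B(s_B(b_1),\dots,s_B(b_k)).$$ That is, $s_B$ is an isomorphism of $B$ onto the algebra on the same set whose basic operations are the term operations $\tilde\omega_B$.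
   Context: $\mathcal V$ is a variety of universal algebras, and $X_0$ is a fixed infinite set. $\Theta^0(\mathcal V)$ is the full subcategory of the category of $\mathcal V$-algebras whose objects are the free $\mathcal V$-algebras on finite subsets of $X_0$. Each object $A$ has a designated basis $X_A\subseteq X_0$. Among the objects is the free algebra $A_0$ on a single $x_0\in X_0$. For an object $A$ and $a\in A$, $\alpha^A_a:A_0\to A$ is the homomorphism with $x_0\mapsto a$. For an automorphism $\Phi$ fixing $A_0$, the main function is $s_A(a)=\Phi(\alpha^A_a)(x_0)$. Each $s_A$ is a bijection, and $\Phi(\mu)=s_B\circ\mu\circ s_A^{-1}$ for every morphism $\mu:A\to B$. For an operation symbol $\omega$, $\omega_A$ denotes the corresponding operation of $A$. *)

(* Defs.v *)
From HB Require Import structures.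
From mathcomp Require Import all_boot finmap.
From Stdlib Require Import ClassicalEpsilon.

Set Implicit Arguments.
Unset Strict Implicit.
Unset Printing Implicit Defensive.

Local Open Scope fset_scope.

Section UnivAlg.
Variables (Op : Type) (ar : Op -> nat).

Record algebra := Algebra {
  car :> Type;
  ops : forall o : Op, ('I_(ar o) -> car) -> car
}.

Inductive term (V : Type) : Type :=
| Var : V -> term V
| App : forall o : Op, ('I_(ar o) -> term V) -> term V.

Fixpoint eval (A : algebra) (V : Type) (v : V -> A) (t : term V) : A :=
  match t with
  | Var x => v x
  | App o ts => @ops A o (fun i => eval v (ts i))
  end.

(* A variety is the class of models of a set E of identities
   (pairs of terms in countably many variables), by Birkhoff. *)
Definition satisfies (E : term nat -> term nat -> Prop) (A : algebra) : Prop :=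
  forall l r, E l r -> forall v : nat -> A, eval v l = eval v r.

Definition is_hom (A B : algebra) (h : A -> B) : Prop :=
  forall (o : Op) (a : 'I_(ar o) -> A), h (@ops A o a) = @ops B o (fun i => h (a i)).

(* [F] is the free algebra of the variety Mod(E) on the set S, with basis
   map [gen] (only its values on S matter). *)
Definition is_free (E : term nat -> term nat -> Prop) (X0 : choiceType)
    (S : {fset X0}) (F : algebra) (gen : X0 -> F) : Prop :=
  satisfies E F /\
  forall B : algebra, satisfies E B -> forall f : X0 -> B,
    exists h : F -> B,
      [/\ is_hom h,
          (forall x, x \in S -> h (gen x) = f x) &
          (forall h' : F -> B, is_hom h' ->
             (forall x, x \in S -> h' (gen x) = f x) -> forall y, h' y = h y)].

End UnivAlg.

Arguments Var {Op ar V}.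
Arguments App {Op ar V}.

(* Objects: F S, for S a finite subset of X0 (basis gen S on S).        *)
(* Morphisms A -> B: homomorphisms F A -> F B.                          *)
Section Theta0.
Variables (Op : Type) (ar : Op -> nat) (X0 : choiceType).
Variable F : {fset X0} -> algebra ar.
Variable gen : forall S : {fset X0}, X0 -> F S.

Definition hom_map := forall A B : {fset X0}, (F A -> F B) -> (F A -> F B).

(* Phi is an automorphism of Theta^0(V) with Phi(A) = A for every object A:
   a functor (hom-preserving, identities, composition) which is bijective on
   each hom-set (it has an inverse Psi). *)
Definition obj_fixing_automorphism (Phi : hom_map) : Prop :=
  [/\ (forall A B (h : F A -> F B), is_hom h -> is_hom (Phi A B h)),
      (forall A (y : F A), Phi A A id y = y),
      (forall A B C (g : F A -> F B) (h : F B -> F C), is_hom g -> is_hom h ->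
         forall y, Phi A C (h \o g) y = Phi B C h (Phi A B g y)) &
      exists Psi : hom_map,
        forall A B (h : F A -> F B), is_hom h ->
          [/\ is_hom (Psi A B h),
              (forall y, Phi A B (Psi A B h) y = h y) &
              (forall y, Psi A B (Phi A B h) y = h y)]].

Variable x0 : X0.

Definition A0 : {fset X0} := [fset x0].

Definition alpha (A : {fset X0}) (a : F A) : F A0 -> F A :=
  epsilon (inhabits (fun _ : F A0 => a))
          (fun h => is_hom h /\ h (gen A0 x0) = a).

(* The main function s_A(a) = Phi(alpha^A_a)(x0). *)
Definition main_fun (Phi : hom_map) (A : {fset X0}) (a : F A) : F A :=
  Phi A0 A (alpha a) (gen A0 x0).

(* nu : A -> B is the homomorphism with nu(x_i) = c_i for i <= k and
   nu(x_i) = c_k for k < i <= n, where x_{i+1} = xs i.                   *)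
Definition subst_hom (A B : {fset X0}) (n : nat) (xs : nat -> X0)
    (k : nat) (c : 'I_k -> F B) (nu : F A -> F B) : Prop :=
  [/\ is_hom nu,
      (forall i (Hi : i < k), nu (gen A (xs i)) = c (Ordinal Hi)) &
      (forall i, k <= i < n -> forall j : 'I_k, val j = k.-1 ->
         nu (gen A (xs i)) = c j)].

End Theta0.

(* Main.v *)
From Stdlib Require Import ClassicalEpsilon FunctionalExtensionality.
Require Import Defs.
From HB Require Import structures.
From mathcomp Require Import all_boot finmap.

Local Open Scope fset_scope.

Theorem mainTheorem6
  (Op : Type) (ar : Op -> nat) (E : term ar nat -> term ar nat -> Prop)
  (X0 : choiceType) (X0_infinite : forall s : seq X0, exists x, x \notin s)
  (F : {fset X0} -> algebra ar) (gen : forall S : {fset X0}, X0 -> F S)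
  (F_free : forall S : {fset X0}, @is_free Op ar E X0 S (F S) (gen S))
  (x0 : X0)
  (Phi : hom_map F)
  (HPhi : obj_fixing_automorphism Phi)
  (Hbasis : forall (A : {fset X0}) (x : X0), x \in A ->
              main_fun gen x0 Phi (gen A x) = gen A x)
  (omega : Op) (Hk : 1 <= ar omega)
  (A : {fset X0}) (n : nat) (xs : nat -> X0)
  (Hxs_inj : {in [pred i | i < n] &, injective xs})
  (Hxs_basis : forall x, x \in A <-> exists2 i, i < n & xs i = x)
  (Hnk : ar omega <= n) :
  let wt := main_fun gen x0 Phi
              (@ops Op ar (F A) omega (fun i : 'I_(ar omega) => gen A (xs (val i)))) in
  forall (B : {fset X0}) (b : 'I_(ar omega) -> F B) (nu : F A -> F B),
    @subst_hom Op ar X0 F gen A B n xs (ar omega) (fun i => main_fun gen x0 Phi (b i)) nu ->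
    main_fun gen x0 Phi (@ops Op ar (F B) omega b) = nu wt.
Proof.
move=> wt B b nu [Hnu Hlt Hge].
case: HPhi => Phom Pid Pcomp _.
have sat : forall S, satisfies E (F S) by move=> S; case: (F_free S).
have alpha_spec : forall S (a : F S), is_hom (@alpha _ _ _ _ gen x0 _ a) /\ @alpha _ _ _ _ gen x0 _ a (gen (A0 x0) x0) = a.
  move=> S a; rewrite /alpha; match goal with |- context [epsilon ?i ?P] => apply: (@epsilon_spec _ i P) end.
  case: (F_free (A0 x0)) => _ /(_ _ (sat S) (fun _ => a)) [h [hh hg _]].
  by exists h; split => //; apply: hg; rewrite /A0 in_fset1.
have key : forall S T (mu : F S -> F T) a, is_hom mu ->
    main_fun gen x0 Phi (mu a) = Phi S T mu (main_fun gen x0 Phi a).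
  move=> S T mu a hmu.
  case: (alpha_spec T (mu a)) => h1 e1; case: (alpha_spec S a) => h2 e2.
  rewrite /main_fun -(Pcomp _ _ _ _ _ h2 hmu).
  congr (Phi _ _ _ _). apply: functional_extensionality => y.
  case: (F_free (A0 x0)) => _ /(_ _ (sat T) (fun _ => mu a)) [h [_ _ hu]].
  have hc : is_hom (mu \o @alpha _ _ _ _ gen x0 _ a).
    by move=> o v /=; rewrite h2 hmu.
  rewrite (hu _ h1); last by move=> z; rewrite /A0 in_fset1 => /eqP ->.
  rewrite (hu _ hc) //; last by move=> z; rewrite /A0 in_fset1 => /eqP -> /=; rewrite e2.
have j0lt : (ar omega).-1 < ar omega by rewrite prednK.
pose j0 : 'I_(ar omega) := Ordinal j0lt.
pose g (i : nat) : F B := match (insub i : option 'I_(ar omega)) with Some j => b j | None => b j0 end.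
pose f (x : X0) : F B := g (find (fun i => xs i == x) (iota 0 n)).
have fxs : forall i, i < n -> f (xs i) = g i.
  move=> i hi; rewrite /f; congr g.
  have hh : has (fun j => xs j == xs i) (iota 0 n).
    by apply/hasP; exists i => //; rewrite mem_iota.
  have := nth_find 0 hh; move: hh; rewrite has_find size_iota => hlt.
  rewrite nth_iota // add0n => /eqP /Hxs_inj; apply => //.
case: (F_free A) => _ /(_ _ (sat B) f) [mu [hmu emu _]].
have xsA : forall i, i < n -> xs i \in A by move=> i hi; apply/Hxs_basis; exists i.
have muw : mu (ops (fun i : 'I_(ar omega) => gen A (xs (val i)))) = ops b.
  rewrite hmu; congr ops; apply: functional_extensionality => i.
  have hi : val i < n by apply: leq_trans (ltn_ord i) Hnk.
  by rewrite emu ?xsA // fxs // /g valK.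
rewrite -muw key //.
case: (F_free A) => _ /(_ _ (sat B) (fun x => Phi A B mu (gen A x))) [h [_ _ hu]].
rewrite (hu _ (Phom _ _ _ hmu)) // (hu _ Hnu) //.
move=> x /Hxs_basis [i hi <-].
rewrite -[in RHS](Hbasis _ _ (xsA i hi)) -key // emu ?xsA // fxs //.
rewrite /g; case: insubP => [j hj hv|hn].
  have -> : j = Ordinal hj by apply: val_inj.
  by rewrite Hlt.
by rewrite (Hge i _ j0) //; rewrite -leqNgt in hn; rewrite hn hi.
Qed.
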